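(* Let $G$ be an $r$-regular finite simple graph of order $n$, $r\ge 1$. If $r$ is even, then $$\frac{1-r}{1+r}\,n\le \gamma^{0}_{st}(G)\le 0,$$ and if $r$ is odd, then $$-\frac{r^2+1}{r^2+2r-1}\,n\le \gamma^{0}_{st}(G)\le -\frac{n}{r}.$$
   Context: For a vertex $v$ of a graph $G=(V,E)$, $N(v)$ is its open neighborhood, and for $f:V\to\mathbb{R}$ and $B\subseteq V$ write $f(B)=\sum_{v\in B}f(v)$; $f(V)$ is the weight of $f$. An inverse signed total dominating function (ISTDF) of $G$ is a function $f:V\to\{-1,1\}$ such that $f(N(v))\le 0$ for every $v\in V$. The inverse signed total domination number $\gamma^{0}_{st}(G)$ is the maximum weight of an ISTDF of $G$. *)

(* Defs.v *)
From HB Require Import structures.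
From mathcomp Require Import all_boot all_order all_algebra.
Set Implicit Arguments. Unset Strict Implicit. Unset Printing Implicit Defensive.
Import Order.TTheory GRing.Theory Num.Theory.
Local Open Scope ring_scope.

Definition simple_graph (T : finType) (e : rel T) : Prop :=
  symmetric e /\ irreflexive e.

Definition nbhd (T : finType) (e : rel T) (v : T) : {set T} := [set u | e v u].

Definition regular (T : finType) (e : rel T) (r : nat) : Prop :=
  forall v : T, #|nbhd e v| = r.

Definition fsum (T : finType) (f : T -> int) (B : {set T}) : int :=
  \sum_(v in B) f v.

Definition weight (T : finType) (f : T -> int) : int := \sum_(v : T) f v.

Definition is_ISTDF (T : finType) (e : rel T) (f : T -> int) : Prop :=
  (forall v : T, f v = 1 \/ f v = -1) /\
  (forall v : T, fsum f (nbhd e v) <= 0).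

Definition is_ISTDFb (T : finType) (e : rel T) (f : T -> int) : bool :=
  [forall v, (f v == 1) || (f v == -1)] && [forall v, fsum f (nbhd e v) <= 0].

Definition sgn_of (T : finType) (g : {ffun T -> bool}) : T -> int :=
  fun v => if g v then 1 else -1.

(* gamma^0_st(G): maximum weight of an ISTDF (all {-1,1}-functions are
   enumerated through {ffun T -> bool}); the fallback value -#|T| is only
   reached if no ISTDF exists, which never happens (f = -1 is an ISTDF). *)
Definition gamma_st0 (T : finType) (e : rel T) : int :=
  \big[Num.max/(- (#|T|%:Z))]_(g : {ffun T -> bool} | is_ISTDFb e (sgn_of g))
     weight (sgn_of g).

(* Main.v *)
Require Import Defs.
From HB Require Import structures.
From mathcomp Require Import all_boot all_order all_algebra.
From mathcomp Require Import lra zify.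
Import Order.TTheory GRing.Theory Num.Theory.
Local Open Scope ring_scope.

Lemma card_sum (T : finType) (A Q : {set T}) :
  #|A :&: Q| = (\sum_(u in Q) (u \in A))%N.
Proof.
rewrite -sum1_card big_mkcond /= [RHS]big_mkcond /=.
by apply: eq_bigr => u _; rewrite inE; case: (u \in A); case: (u \in Q).
Qed.

Lemma fsum_card (T : finType) (g : {ffun T -> bool}) (B : {set T}) :
  fsum (sgn_of g) B = (#|B :&: [set u | g u]|)%:Z - (#|B :&: ~: [set u | g u]|)%:Z.
Proof.
rewrite /fsum (bigID (fun v => g v)) /=.
have -> : \sum_(i in B | g i) sgn_of g i = \sum_(i in B :&: [set u | g u]) 1.
  rewrite big_mkcond [RHS]big_mkcond /=; apply: eq_bigr => u _.
  by rewrite !inE /sgn_of; case: (u \in B); case: (g u).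
have -> : \sum_(i in B | ~~ g i) sgn_of g i = \sum_(i in B :&: ~: [set u | g u]) (-1).
  rewrite big_mkcond [RHS]big_mkcond /=; apply: eq_bigr => u _.
  by rewrite !inE /sgn_of; case: (u \in B); case: (g u).
by rewrite !sumr_const mulNrn !natz.
Qed.
Lemma dummy : True. Proof. by [].
Qed.

Lemma weight_fsum (T : finType) (f : T -> int) : weight f = fsum f [set: T].
Proof. by rewrite /weight /fsum; apply: eq_bigl => x; rewrite inE. Qed.

Lemma double_count (T : finType) (e : rel T) (r : nat) (Q : {set T}) :
  symmetric e -> regular e r ->
  (\sum_v #|nbhd e v :&: Q| = r * #|Q|)%N.
Proof.
move=> sy reg.
under eq_bigr => v _ do rewrite card_sum.
rewrite exchange_big /=.
under eq_bigr => u _.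
  have -> : (\sum_v (u \in nbhd e v) = #|nbhd e u|)%N.
    rewrite -sum1_card [RHS]big_mkcond /=; apply: eq_bigr => v _.
    by rewrite !inE sy; case: (e u v).
  rewrite reg; over.
by rewrite sum_nat_const mulnC.
Qed.

Lemma gamma_spec (T : finType) (e : rel T) : exists gm : {ffun T -> bool},
  is_ISTDFb e (sgn_of gm) /\ gamma_st0 e = weight (sgn_of gm) /\
  forall g, is_ISTDFb e (sgn_of g) -> weight (sgn_of g) <= gamma_st0 e.
Proof.
have le : forall g, is_ISTDFb e (sgn_of g) -> weight (sgn_of g) <= gamma_st0 e.
  by move=> g Hg; rewrite /gamma_st0 (bigD1 g) //= le_max lexx.
have [E|[g [Hg E]]] : gamma_st0 e = - (#|T|%:Z) \/
    exists g, is_ISTDFb e (sgn_of g) /\ gamma_st0 e = weight (sgn_of g).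
- rewrite /gamma_st0; apply: (big_ind (fun x => x = - (#|T|%:Z) \/
    exists g, is_ISTDFb e (sgn_of g) /\ x = weight (sgn_of g))); first by left.
    by move=> x y Hx Hy; rewrite maxEle; case: ifP.
  by move=> g Hg; right; exists g.
- exists [ffun=> false].
  have H0 : is_ISTDFb e (sgn_of [ffun=> false]).
    apply/andP; split; apply/forallP => v.
      by rewrite /sgn_of ffunE eqxx orbT.
    by rewrite /fsum; apply: sumr_le0 => i _; rewrite /sgn_of ffunE.
  split=> //; split=> //.
  rewrite E /weight /sgn_of.
  under eq_bigr => i _ do rewrite ffunE /=.
  by rewrite sumr_const mulNrn natz cardE.
- by exists g.
Qed.

Theorem theorem3p2 (T : finType) (e : rel T) (r : nat) :
  simple_graph e -> regular e r -> (1 <= r)%N ->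
  let n : rat := (#|T|%:R) in
  let g : rat := (gamma_st0 e)%:~R in
  (~~ odd r ->
     (1 - r%:R) / (1 + r%:R) * n <= g /\ g <= 0) /\
  (odd r ->
     - ((r%:R ^+ 2 + 1) / (r%:R ^+ 2 + 2 * r%:R - 1)) * n <= g /\
     g <= - (n / r%:R)).
Proof.
move=> [sy irr] reg r1 n g0; rewrite /n /g0 {n g0}.
have [gm [Hgm [Eg Hmax]]] := @gamma_spec _ e.
set P := [set u | gm u].
have Hf : forall v, (#|nbhd e v :&: P| <= #|nbhd e v :&: ~:P|)%N.
  move=> v; move/andP: Hgm => [_ /forallP /(_ v)].
  by rewrite fsum_card subr_le0 lez_nat.
have Hab : forall v, (#|nbhd e v :&: P| + #|nbhd e v :&: ~:P| = r)%N.
  by move=> v; rewrite -setDE cardsID reg.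
have SA := double_count _ _ _ P sy reg.
have SB := double_count _ _ _ (~:P) sy reg.
have Hn : (#|P| + #|~:P| = #|T|)%N := cardsC P.
have Ew : gamma_st0 e = #|P|%:Z - #|~:P|%:Z.
  by rewrite Eg weight_fsum fsum_card !setTI.
have cz : forall k : nat, ((k%:Z)%:~R : rat) = k%:R by [].
rewrite Ew intrD intrN !cz -Hn natrD.
have r1' : (1:rat) <= r%:R by rewrite ler1n.
have rpos : (0 : rat) < r%:R by rewrite ltr0n.
have Up : (#|P| <= #|~:P|)%N.
  rewrite -(@leq_pmul2l r) // -SA -SB; exact: leq_sum.
have Upo : odd r -> (r * #|P| + #|T| <= r * #|~:P|)%N.
  move=> od; rewrite -SA -SB.
  have -> : #|T| = (\sum_(v : T) 1)%N by rewrite -sum1_card; apply: eq_bigl.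
  rewrite -big_split /=; apply: leq_sum => v _.
  rewrite addn1 ltn_neqAle Hf andbT; apply/eqP => E.
  by move: od; rewrite -(Hab v) E addnn odd_double.
set Z := [set u | (#|nbhd e u :&: ~:P| <= #|nbhd e u :&: P| + 1)%N].
have claim : forall v, v \in ~: P -> exists2 u, u \in Z & e u v.
  move=> v Hv.
  case: (boolP [exists u in Z, e u v]) => [/exists_inP [u Hu Heu]|Hne].
    by exists u.
  exfalso.
  have gv : gm v = false by move: Hv; rewrite !inE; case: (gm v).
  set g' := [ffun x => (x == v) || gm x].
  have Hs : forall B, fsum (sgn_of g') B = fsum (sgn_of gm) B + (if v \in B then 2 else 0).
    move=> B; rewrite /fsum; case: ifP => vB.
      rewrite (bigD1 v vB) [X in _ = X + _](bigD1 v vB) /=.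
      rewrite {1}/sgn_of ffunE eqxx {2}/sgn_of gv /=.
      have -> : \sum_(i in B | i != v) sgn_of g' i = \sum_(i in B | i != v) sgn_of gm i.
        by apply: eq_bigr => i /andP [_ ne]; rewrite /sgn_of ffunE (negbTE ne).
      by rewrite addrAC -addrA; congr (_ + _).
    rewrite addr0; apply: eq_bigr => i iB; rewrite /sgn_of ffunE.
    have -> : (i == v) = false by apply/eqP => E; move: vB; rewrite -E iB.
    by [].
  have Hg' : is_ISTDFb e (sgn_of g').
    apply/andP; split; apply/forallP => w.
      by rewrite /sgn_of ffunE; case: ((w == v) || gm w).
    rewrite Hs; case: ifP => wv.
      have wZ : w \notin Z.
        apply: contra Hne => wZ; apply/exists_inP; exists w => //.
        by move: wv; rewrite inE.
      move: wZ; rewrite inE -ltnNge fsum_card => H.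
      rewrite -/P; lia.
    by rewrite addr0; move/andP: Hgm => [_ /forallP /(_ w)].
  have := Hmax _ Hg'.
  rewrite Eg !weight_fsum Hs inE.
  lia.
have M1 : (#|~:P| <= \sum_(u in Z) #|nbhd e u :&: ~:P|)%N.
  rewrite -sum1_card.
  under [X in (_ <= X)%N]eq_bigr => u _ do rewrite card_sum.
  rewrite exchange_big /=; apply: leq_sum => v Hv.
  have [u Hu Heu] := claim v Hv.
  by rewrite (bigD1 u Hu) /= inE Heu.
have M2 : (\sum_(u in Z) #|nbhd e u :&: P| <= r * #|P|)%N.
  rewrite -SA [X in (_ <= X)%N](bigID (fun u => u \in Z)) /=; exact: leq_addr.
have M3 : forall u, u \in Z ->
    (#|nbhd e u :&: ~:P| * r./2 = #|nbhd e u :&: P| * uphalf r)%N.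
  move=> u; rewrite inE; have := Hf u; have := Hab u.
  move: (#|nbhd e u :&: ~:P|) (#|nbhd e u :&: P|) => x y.
  rewrite uphalf_half; have := odd_double_half r; rewrite -muln2.
  case: (odd r) => /= Hr H1 H2 H3.
    have [-> ->] : y = r./2 /\ x = (r./2 + 1)%N by lia.
    by rewrite mulnC [(_ + 1)%N]addnC.
  by have [-> ->] : y = r./2 /\ x = r./2 by lia.
have Low : (#|~:P| * r./2 <= r * #|P| * uphalf r)%N.
  apply: (leq_trans (leq_mul M1 (leqnn _))).
  rewrite big_distrl /= (eq_bigr _ M3) -big_distrl /=.
  exact: leq_mul M2 (leqnn _).
have Hr := odd_double_half r; rewrite -muln2 in Hr.
have Hu := uphalf_half r.
split.
  move=> ev; rewrite (negbTE ev) /= in Hr Hu.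
  have h1 : (0 < r./2)%N by lia.
  have Low' : (#|~:P| <= r * #|P|)%N by rewrite -(@leq_pmul2r r./2) // ; move: Low; rewrite Hu ?add0n.
  have Up' : (#|P|%:R <= #|~:P|%:R :> rat) by rewrite ler_nat.
  have Low'' : (#|~:P|%:R <= r%:R * #|P|%:R :> rat) by rewrite -natrM ler_nat.
  split; last by lra.
  rewrite mulrAC ler_pdivrMr; last by lra.
  lra.
move=> od; rewrite od /= in Hr Hu.
have Up' := Upo od.
have U1 : (r%:R * #|P|%:R + #|T|%:R <= r%:R * #|~:P|%:R :> rat).
  by rewrite -!natrM -natrD ler_nat.
rewrite -Hn natrD in U1.
have L1 : (#|~:P|%:R * (r./2)%:R <= r%:R * #|P|%:R * (1 + (r./2)%:R) :> rat).
  have -> : (1 + (r./2)%:R : rat) = (uphalf r)%:R by rewrite uphalf_half od natrD.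
  by rewrite -!natrM ler_nat.
have Er : (r%:R : rat) = 1 + 2 * (r./2)%:R.
  by rewrite -{1}Hr natrD natrM mulrC.
have h0 : (0 : rat) <= (r./2)%:R by rewrite ler0n.
have p0 : (0 : rat) <= (#|P|)%:R by rewrite ler0n.
have m0 : (0 : rat) <= (#|~:P|)%:R by rewrite ler0n.
split.
  rewrite mulNr mulrAC -mulNr ler_pdivrMr; last by nra.
  rewrite Er in L1 *; lra.
rewrite -mulNr ler_pdivlMr //; lra.
Qed.
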